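(* Assume $g^\partial$ nondegenerate and define on $\widetilde{\mathcal F}_{PCH}=\Omega^1_{nd}(\partial M,\mathcal V^\partial)\times\mathcal A_{\iota^*P}$ the functions $\widetilde v(\omega,e)=-\phi_e^{-1}(p\,d_\omega e)\in\ker\mathsf W_e^{(1,2)}$ and $\widetilde\omega(\omega,e)=\omega+\widetilde v(\omega,e)$. Then $\widetilde\omega$ is invariant under $\omega\mapsto\omega+v$ for $v\in\ker\mathsf W_e^{(1,2)}$ (i.e. it is basic with respect to $\mathcal A_{\iota^*P}\to\mathcal A_{\iota^*P}^{red}$), $[\widetilde\omega]_e=[\omega]_e$, $p\,d_{\widetilde\omega}e=0$, and $d_{\widetilde\omega}e=0$ holds if and only if $e\wedge d_\omega e=0$.
   Context: Setting as follows. $\partial M$ is the boundary 3-manifold of a 4-manifold, $\mathcal V^\partial$ a rank-4 bundle with fibre Minkowski metric $\eta$, $\iota^*P$ the associated principal $SO(3,1)$-bundle with space of connections $\mathcal A_{\iota^*P}$; $\bigwedge^2\mathcal V^\partial\cong\mathfrak{so}(3,1)$ acts via $[\cdot,\cdot]$ (combined with wedge of forms); $d_\omega\phi=d\phi+[\omega,\phi]$. $\Omega^1_{nd}(\partial M,\mathcal V^\partial)$: 1-forms injective at each point; $g^\partial=e^*\eta$. $\mathsf W_e^{(i,j)}(X)=X\wedge e$ on $\Omega^i(\partial M,\bigwedge^j\mathcal V^\partial)$; $\mathcal W_{(i,j)}=\ker\mathsf W_e^{(i,j)}$ with chosen complements $\mathcal C_{(i,j)}$; $p$ denotes the projection onto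 $\mathcal W_{(2,1)}$ along $\mathcal C_{(2,1)}$. $\phi_e:=p\circ[\cdot,e]|_{\mathcal W_{(1,2)}}:\mathcal W_{(1,2)}\to\mathcal W_{(2,1)}$ (an isomorphism when $g^\partial$ is nondegenerate). $\mathcal A^{red}_{\iota^*P}=\mathcal A_{\iota^*P}/\!\sim$ with $\omega\sim\omega'$ iff $\omega-\omega'\in\ker\mathsf W^{(1,2)}_e$, and $[\omega]_e$ the class of $\omega$. *)

(* Defs.v *)
(* Pointwise (fibrewise) model of the bigraded algebra
   Omega^i(dM, Lambda^j V) at a point of the 3-dimensional boundary,
   with V = R^4 carrying the Minkowski metric eta = diag(-1,1,1,1). *)
From HB Require Import structures.
From mathcomp Require Import all_boot all_order all_algebra.
Set Implicit Arguments. Unset Strict Implicit. Unset Printing Implicit Defensive.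
Import Order.TTheory GRing.Theory Num.Theory.
Local Open Scope ring_scope.

Notation bform R := {ffun {set 'I_3} * {set 'I_4} -> R^o}.

Section Defs.
Variable R : realFieldType.

(* An element of  (Lambda (R^3)^* ) (x) (Lambda R^4): the coefficient of
   dx^S (x) e_T, for S a subset of {0,1,2} and T a subset of {0,..,3}. *)

Definition homog (i j : nat) (f : bform R) : Prop :=
  forall S T, f (S, T) != 0 -> #|S| = i /\ #|T| = j.

(* sign of the shuffle putting A followed by B in increasing order *)
Definition sgnsh (n : nat) (A B : {set 'I_n}) : R :=
  (-1) ^+ #|[set ij : 'I_n * 'I_n | [&& ij.1 \in A, ij.2 \in B & (ij.2 < ij.1)%N]]|.

(* wedge product of V-valued forms, with the Koszul convention
   (a (x) X) /\ (b (x) Y) = (-1)^{|X||b|} (a /\ b) (x) (X /\ Y) *)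
Definition wedge (f g : bform R) : bform R :=
  [ffun ST : {set 'I_3} * {set 'I_4} =>
     \sum_(A : {set 'I_3} | A \subset ST.1) \sum_(B : {set 'I_4} | B \subset ST.2)
       sgnsh A (ST.1 :\: A) * sgnsh B (ST.2 :\: B)
       * (-1) ^+ (#|B| * #|ST.1 :\: A|)
       * f (A, B) * g (ST.1 :\: A, ST.2 :\: B)].

Definition eta (j : 'I_4) : R := if j == ord0 then -1 else 1.

(* action of Lambda^2 V = so(3,1) on V:
   (e_a /\ e_b) . e_c = e_a eta(e_b,e_c) - e_b eta(e_a,e_c);
   act_coef X c d = coefficient of e_d in X . e_c for X a basis bivector *)
Definition act_coef (X : {set 'I_4}) (c d : 'I_4) : R :=
  \sum_(a : 'I_4) \sum_(b : 'I_4 | (a < b)%N && (X == [set a; b]))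
     ((d == a)%:R * (b == c)%:R * eta b - (d == b)%:R * (a == c)%:R * eta a).

(* [f, g] for f a Lambda^2 V-valued bform and g a V-valued bform
   (combined with the wedge of the bform parts); result is V-valued *)
Definition brk (f g : bform R) : bform R :=
  [ffun ST : {set 'I_3} * {set 'I_4} =>
     \sum_(d : 'I_4 | ST.2 == [set d])
     \sum_(A : {set 'I_3} | A \subset ST.1)
       sgnsh A (ST.1 :\: A) *
       \sum_(X : {set 'I_4} | #|X| == 2%N) \sum_(c : 'I_4)
          f (A, X) * g (ST.1 :\: A, [set c]) * act_coef X c d].

(* covariant derivative d_omega e = d e + [omega, e]; de is the value
   of the exterior derivative of e (in the chosen trivialization) *)
Definition dcov (de omega e : bform R) : bform R := de + brk omega e.

Definition inW (i j : nat) (e X : bform R) : Prop := homog i j X /\ wedge X e = 0.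

Definition emat (e : bform R) : 'M[R]_(3, 4) := \matrix_(i < 3, j < 4) e ([set i], [set j]).
Definition gmat (e : bform R) : 'M[R]_3 :=
  emat e *m diag_mx (\row_j eta j) *m (emat e)^T.

Definition same_class (e omega omega' : bform R) : Prop := inW 1 2 e (omega - omega').

End Defs.

(* Main.v *)
Require Import Defs.
From HB Require Import structures.
From mathcomp Require Import all_boot all_order all_algebra.
From mathcomp Require Import ring.
From Stdlib Require PeanoNat.
Set Implicit Arguments. Unset Strict Implicit. Unset Printing Implicit Defensive.
Import Order.TTheory GRing.Theory Num.Theory.
Local Open Scope ring_scope.

Definition s3 (k : nat) : {set 'I_3} := [set i : 'I_3 | Nat.testbit k i].
Definition s4 (k : nat) : {set 'I_4} := [set i : 'I_4 | Nat.testbit k i].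
Definition bm3 (X : {set 'I_3}) : nat :=
  Nat.add (Nat.add (if @Ordinal 3 0 isT \in X then 1 else 0) (if @Ordinal 3 1 isT \in X then 2 else 0))
   (if @Ordinal 3 2 isT \in X then 4 else 0).
Definition bm4 (X : {set 'I_4}) : nat :=
  Nat.add (Nat.add (Nat.add (if @Ordinal 4 0 isT \in X then 1 else 0) (if @Ordinal 4 1 isT \in X then 2 else 0))
   (if @Ordinal 4 2 isT \in X then 4 else 0)) (if @Ordinal 4 3 isT \in X then 8 else 0).

Lemma s3bm3 X : s3 (bm3 X) = X.
Proof.
apply/setP => -[[|[|[|//]]] Hi]; rewrite inE /bm3;
set o0 := Ordinal _; set o1 := Ordinal _; set o2 := Ordinal _;
[have -> : Ordinal Hi = o0 by apply/val_inj
|have -> : Ordinal Hi = o1 by apply/val_inj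
|have -> : Ordinal Hi = o2 by apply/val_inj];
by case: (o0 \in X); case: (o1 \in X); case: (o2 \in X).
Qed.

Lemma s4bm4 X : s4 (bm4 X) = X.
Proof.
apply/setP => -[[|[|[|[|//]]]] Hi]; rewrite inE /bm4;
set o0 := Ordinal _; set o1 := Ordinal _; set o2 := Ordinal _; set o3 := Ordinal _;
[have -> : Ordinal Hi = o0 by apply/val_inj
|have -> : Ordinal Hi = o1 by apply/val_inj
|have -> : Ordinal Hi = o2 by apply/val_inj
|have -> : Ordinal Hi = o3 by apply/val_inj];
by case: (o0 \in X); case: (o1 \in X); case: (o2 \in X); case: (o3 \in X).
Qed.

Section Sums.
Variable R : realFieldType.

Lemma sumA1 n (S : {set 'I_n}) (F : {set 'I_n} -> R) :
  (forall A : {set 'I_n}, #|A| != 1%N -> F A = 0) ->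
  \sum_(A : {set 'I_n} | A \subset S) F A = \sum_(x < n) (if x \in S then F [set x] else 0).
Proof.
move=> HF; rewrite -big_mkcond /=.
rewrite (bigID (fun A : {set 'I_n} => #|A| == 1%N)) /= [X in _ + X]big1 ?addr0; last first.
  by move=> A /andP[_ /HF].
rewrite -(big_imset F (h := fun x => [set x])) /=; last by move=> x y _ _ /set1_inj.
apply: eq_bigl => A; apply/andP/imsetP.
- case=> sAS /cards1P[x Ex]; exists x; last by []. by rewrite -sub1set -Ex.
- by case=> x xS ->; rewrite sub1set cards1.
Qed.

Lemma sumAc1 n (S : {set 'I_n}) (F : {set 'I_n} -> R) :
  (forall A : {set 'I_n}, A \subset S -> #|S :\: A| != 1%N -> F A = 0) ->
  \sum_(A : {set 'I_n} | A \subset S) F A = \sum_(x < n) (if x \in S then F (S :\ x) else 0).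
Proof.
move=> HF; rewrite -big_mkcond /=.
rewrite (bigID (fun A : {set 'I_n} => #|S :\: A| == 1%N)) /= [X in _ + X]big1 ?addr0; last first.
  by move=> A /andP[sAS /HF]; apply.
rewrite -(big_imset F (h := fun x => S :\ x)) /=; last first.
  move=> x y xS yS Exy; apply/eqP; apply: contraT => nxy.
  have : x \in S :\ y by rewrite !inE xS andbT; apply: contraNneq nxy => ->.
  by rewrite -Exy !inE eqxx.
apply: eq_bigl => A; apply/andP/imsetP.
- case=> sAS /cards1P[x Ex].
  have xSA : x \in S :\: A by rewrite Ex set11.
  exists x; first by move: xSA; rewrite inE => /andP[].
  by rewrite -Ex setDDr setDv set0U (setIidPr sAS).
- case=> x xS ->; rewrite subsetDl; split=> //.
  by rewrite setDDr setDv set0U (setIidPr _) ?cards1 // sub1set.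
Qed.
End Sums.

Section Eval.
Variable R : realFieldType.
Implicit Types (f g : bform R) (S : {set 'I_3}) (T : {set 'I_4}).

Lemma sgnshE n (A B : {set 'I_n}) : sgnsh R A B =
  \prod_(x < n) \prod_(y < n) (if (x \in A) && (y \in B) && (y < x)%N then -1 else 1).
Proof.
rewrite /sgnsh -sum1_card.
rewrite (big_morph (fun k : nat => (-1) ^+ k : R) (id2 := 0%N) (op2 := addn)
   (fun a b => exprD (-1) a b) (expr0 _)).
rewrite pair_bigA /= big_mkcond /=; apply: eq_bigr => -[x y] _.
by rewrite inE /= andbA expr1.
Qed.

Lemma homog0 i j f S T : homog i j f -> (#|S| != i) || (#|T| != j) -> f (S, T) = 0.
Proof.
move=> hf H; apply/eqP; apply: contraTT H => /hf [-> ->]; by rewrite !eqxx.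
Qed.

Lemma wedgeE0 i j k l f g S T : homog i j f -> homog k l g ->
  wedge f g (S, T) = \sum_(A : {set 'I_3} | A \subset S) \sum_(B : {set 'I_4} | B \subset T)
    sgnsh R A (S :\: A) * sgnsh R B (T :\: B) * (-1) ^+ (j * k) * f (A, B) * g (S :\: A, T :\: B).
Proof.
move=> hf hg; rewrite ffunE /=; apply: eq_bigr => A _; apply: eq_bigr => B _.
have [f0|/hf [_ ->]] := eqVneq (f (A, B)) 0; first by rewrite f0 !(mulr0, mul0r).
have [g0|/hg [-> _]] := eqVneq (g (S :\: A, T :\: B)) 0; first by rewrite g0 !(mulr0, mul0r).
by [].
Qed.

Lemma wedgeE1 i j f g S T : homog i j f -> homog 1 1 g ->
  wedge f g (S, T) = \sum_(x < 3) (if x \in S then \sum_(y < 4) (if y \in T then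
    sgnsh R (S :\ x) (S :\: (S :\ x)) * sgnsh R (T :\ y) (T :\: (T :\ y)) * (-1) ^+ j
    * f (s3 (bm3 (S :\ x)), s4 (bm4 (T :\ y)))
    * g (s3 (bm3 (S :\: (S :\ x))), s4 (bm4 (T :\: (T :\ y)))) else 0) else 0).
Proof.
move=> hf hg; rewrite (wedgeE0 _ _ hf hg) muln1.
rewrite sumAc1; last first.
  move=> A _ HA; apply: big1 => B _; rewrite (homog0 hg) ?mulr0 //.
  by rewrite HA.
apply: eq_bigr => x _; case: ifP => // _.
rewrite sumAc1; last first.
  move=> B _ HB; rewrite (homog0 hg) ?mulr0 //.
  by rewrite HB orbT.
apply: eq_bigr => y _; case: ifP => // _.
by rewrite !s3bm3 !s4bm4.
Qed.

Lemma wedgeE2 k l f g S T : homog 1 1 f -> homog k l g ->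
  wedge f g (S, T) = \sum_(x < 3) (if x \in S then \sum_(y < 4) (if y \in T then
    sgnsh R [set x] (S :\: [set x]) * sgnsh R [set y] (T :\: [set y]) * (-1) ^+ k
    * f (s3 (bm3 [set x]), s4 (bm4 [set y]))
    * g (s3 (bm3 (S :\: [set x])), s4 (bm4 (T :\: [set y]))) else 0) else 0).
Proof.
move=> hf hg; rewrite (wedgeE0 _ _ hf hg) mul1n.
rewrite sumA1; last first.
  move=> A HA; apply: big1 => B _; rewrite (homog0 hf) ?mulr0 ?mul0r //.
  by rewrite HA.
apply: eq_bigr => x _; case: ifP => // _.
rewrite sumA1; last first.
  move=> B HB; rewrite (homog0 hf) ?mulr0 ?mul0r //.
  by rewrite HB orbT.
apply: eq_bigr => y _; case: ifP => // _.
by rewrite !s3bm3 !s4bm4.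
Qed.

Definition hact (a b c d : 'I_4) : R :=
  (d == a)%:R * (b == c)%:R * Defs.eta R b - (d == b)%:R * (a == c)%:R * Defs.eta R a.

Lemma set1_eqE (T : finType) (a b : T) : ([set a] == [set b]) = (b == a).
Proof.
apply/eqP/eqP => [E|->] //.
have : b \in [set a] by rewrite E set11.
by rewrite inE => /eqP.
Qed.

Lemma brkE f g S (d : 'I_4) : homog 1 2 f ->
  brk f g (S, [set d]) = \sum_(x < 3) (if x \in S then sgnsh R [set x] (S :\: [set x]) *
    \sum_(a < 4) \sum_(b < 4) (if (a < b)%N then \sum_(c < 4)
      f (s3 (bm3 [set x]), s4 (bm4 [set a; b])) * g (s3 (bm3 (S :\: [set x])), s4 (bm4 [set c]))
      * hact a b c d else 0) else 0).
Proof.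
move=> hf; rewrite ffunE /=.
rewrite (big_pred1 d) => [|d']; last by rewrite set1_eqE.
rewrite sumA1; last first.
  move=> A HA; rewrite big1 ?mulr0 // => X _; apply: big1 => c _.
  by rewrite (homog0 hf) ?mul0r // HA.
apply: eq_bigr => x _; case: ifP => // _; congr (_ * _).
rewrite !s3bm3.
transitivity (\sum_(X : {set 'I_4} | #|X| == 2%N) \sum_(c < 4) \sum_(a < 4) \sum_(b < 4)
   (if (a < b)%N then (if X == [set a; b] then
     f ([set x], [set a; b]) * g (S :\: [set x], [set c]) * hact a b c d else 0) else 0)).
  apply: eq_bigr => X _; apply: eq_bigr => c _.
  rewrite /act_coef big_distrr /=; apply: eq_bigr => a _.
  rewrite big_distrr /= big_mkcond /=; apply: eq_bigr => b _.
  case ab: (a < b)%N => //=.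
  by case: eqP => [->|_] /=; rewrite /hact.
rewrite exchange_big /=.
under eq_bigr => c _ do (rewrite exchange_big /=; under eq_bigr => a _ do rewrite exchange_big /=).
rewrite exchange_big /=.
under eq_bigr => a _ do rewrite exchange_big /=.
apply: eq_bigr => a _; apply: eq_bigr => b _.
case: ifP => ab; last by rewrite big1 // => c _; rewrite big1.
apply: eq_bigr => c _.
rewrite (bigD1 [set a; b]) /=; last by rewrite cards2 neq_ltn ab.
rewrite eqxx big1 ?addr0; last by move=> X /andP[_ /negbTE ->].
by rewrite s4bm4 s4bm4.
Qed.
End Eval.

Definition o30 := @Ordinal 3 0 isT.
Definition o31 := @Ordinal 3 1 isT.
Definition o32 := @Ordinal 3 2 isT.
Definition o40 := @Ordinal 4 0 isT.
Definition o41 := @Ordinal 4 1 isT.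
Definition o42 := @Ordinal 4 2 isT.
Definition o43 := @Ordinal 4 3 isT.

Lemma sum3E (V : nmodType) (F : 'I_3 -> V) : \sum_(x < 3) F x = F o30 + F o31 + F o32.
Proof.
rewrite !big_ord_recr big_ord0 /= add0r.
by congr (F _ + F _ + F _); apply/val_inj.
Qed.
Lemma sum4E (V : nmodType) (F : 'I_4 -> V) : \sum_(x < 4) F x = F o40 + F o41 + F o42 + F o43.
Proof.
rewrite !big_ord_recr big_ord0 /= add0r.
by congr (F _ + F _ + F _ + F _); apply/val_inj.
Qed.
Lemma card3E (P : pred 'I_3) : #|[set z | P z]| = Nat.add (Nat.add (P o30) (P o31)) (P o32).
Proof.
rewrite -sum1_card big_mkcond /= (sum3E (V := nat)) !inE /=.
by case: (P o30); case: (P o31); case: (P o32).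
Qed.
Lemma card4E (P : pred 'I_4) : #|[set z | P z]| = Nat.add (Nat.add (Nat.add (P o40) (P o41)) (P o42)) (P o43).
Proof.
rewrite -sum1_card big_mkcond /= (sum4E (V := nat)) !inE /=.
by case: (P o40); case: (P o41); case: (P o42); case: (P o43).
Qed.
Lemma pairs4E (V : nmodType) (F : 'I_4 -> 'I_4 -> V) :
  \sum_(a < 4) \sum_(b < 4) (if (a < b)%N then F a b else 0) =
  F o40 o41 + F o40 o42 + F o40 o43 + F o41 o42 + F o41 o43 + F o42 o43.
Proof.
rewrite !sum4E /= !add0r !addr0.
by rewrite !addrA.
Qed.

Section Eval2.
Variable R : realFieldType.
Implicit Types (f g : bform R) (S : {set 'I_3}) (T : {set 'I_4}).

Lemma sg_r n (A : {set 'I_n}) x : sgnsh R A [set x] = (-1) ^+ #|[set z in A | (x < z)%N]|.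
Proof.
rewrite /sgnsh; congr (_ ^+ _).
transitivity #|[set (z, x) | z in [set z in A | (x < z)%N]]|; last first.
  by apply: card_imset => ? ? [].
apply: eq_card => -[z w]; rewrite inE /=.
apply/andP/imsetP => [[zA /andP[/set1P -> xz]]|[z' ]].
  by exists z => //; rewrite inE zA.
by rewrite inE => /andP[z'A xz'] [-> ->]; rewrite z'A inE eqxx.
Qed.

Lemma sg_l n (B : {set 'I_n}) x : sgnsh R [set x] B = (-1) ^+ #|[set z in B | (z < x)%N]|.
Proof.
rewrite /sgnsh; congr (_ ^+ _).
transitivity #|[set (x, z) | z in [set z in B | (z < x)%N]]|; last first.
  by apply: card_imset => ? ? [].
apply: eq_card => -[z w]; rewrite inE /=.
apply/andP/imsetP => [[/set1P -> /andP[wB wx]]|[z' ]].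
  by exists w => //; rewrite inE wB.
by rewrite inE => /andP[z'B xz'] [-> ->]; rewrite z'B inE eqxx.
Qed.

Lemma setDD1 n (S : {set 'I_n}) x : x \in S -> S :\: (S :\ x) = [set x].
Proof. by move=> xS; rewrite setDDr setDv set0U (setIidPr _) // sub1set. Qed.

Lemma card_gtD1 n (S : {set 'I_n}) x :
  #|[set z in S :\ x | (x < z)%N]| = #|[set z in S | (x < z)%N]|.
Proof.
apply: eq_card => z; rewrite !inE.
by case: eqP => [->|]; rewrite ?ltnn ?andbF.
Qed.

Lemma card_ltD1 n (S : {set 'I_n}) x :
  #|[set z in S :\ x | (z < x)%N]| = #|[set z in S | (z < x)%N]|.
Proof.
apply: eq_card => z; rewrite !inE.
by case: eqP => [->|]; rewrite ?ltnn ?andbF.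
Qed.

Lemma wedgeF i j f g S T : homog i j f -> homog 1 1 g ->
  wedge f g (S, T) = \sum_(x < 3) (if x \in S then \sum_(y < 4) (if y \in T then
    (-1) ^+ (#|[set z in S | (x < z)%N]| + #|[set z in T | (y < z)%N]| + j)
    * f (s3 (bm3 (S :\ x)), s4 (bm4 (T :\ y)))
    * g (s3 (bm3 [set x]), s4 (bm4 [set y])) else 0) else 0).
Proof.
move=> hf hg; rewrite (wedgeE1 _ _ hf hg); apply: eq_bigr => x _.
case: ifP => // xS; apply: eq_bigr => y _; case: ifP => // yT.
rewrite !setDD1 // !sg_r card_gtD1 card_gtD1 !exprD.
by rewrite -!mulrA.
Qed.

Lemma wedgeG k l f g S T : homog 1 1 f -> homog k l g ->
  wedge f g (S, T) = \sum_(x < 3) (if x \in S then \sum_(y < 4) (if y \in T then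
    (-1) ^+ (#|[set z in S | (z < x)%N]| + #|[set z in T | (z < y)%N]| + k)
    * f (s3 (bm3 [set x]), s4 (bm4 [set y]))
    * g (s3 (bm3 (S :\ x)), s4 (bm4 (T :\ y))) else 0) else 0).
Proof.
move=> hf hg; rewrite (wedgeE2 _ _ hf hg); apply: eq_bigr => x _.
case: ifP => // xS; apply: eq_bigr => y _; case: ifP => // yT.
rewrite !sg_l card_ltD1 card_ltD1 !exprD.
by rewrite -!mulrA.
Qed.

Lemma brkF f g S (d : 'I_4) : homog 1 2 f ->
  brk f g (S, [set d]) = \sum_(x < 3) (if x \in S then (-1) ^+ #|[set z in S | (z < x)%N]| *
    \sum_(a < 4) \sum_(b < 4) (if (a < b)%N then
      f (s3 (bm3 [set x]), s4 (bm4 [set a; b])) *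
      ((d == a)%:R * Defs.eta R b * g (s3 (bm3 (S :\ x)), s4 (bm4 [set b]))
       - (d == b)%:R * Defs.eta R a * g (s3 (bm3 (S :\ x)), s4 (bm4 [set a]))) else 0) else 0).
Proof.
move=> hf; rewrite brkE //; apply: eq_bigr => x _.
case: ifP => // xS; rewrite sg_l card_ltD1; congr (_ * _).
apply: eq_bigr => a _; apply: eq_bigr => b _; case: ifP => // ab.
rewrite (bigD1 a) //= (bigD1 b) //=; last by rewrite neq_ltn ab orbT.
rewrite big1 ?addr0; last first.
  move=> c /andP[cb ca]; rewrite /hact.
  rewrite (eq_sym b c) (negbTE ca) (eq_sym a c) (negbTE cb) /=; ring.
have nab : (a == b) = false by apply/negbTE; rewrite neq_ltn ab.
have nba : (b == a) = false by rewrite eq_sym.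
rewrite /hact !eqxx nab nba /= ?mulr0n ?mulr1n.
ring.
Qed.
End Eval2.

Definition bm3f (P : nat -> bool) : nat :=
  Nat.add (Nat.add (if P 0%N then 1%N else 0%N) (if P 1%N then 2%N else 0%N)) (if P 2%N then 4%N else 0%N).
Definition bm4f (P : nat -> bool) : nat :=
  Nat.add (Nat.add (Nat.add (if P 0%N then 1%N else 0%N) (if P 1%N then 2%N else 0%N))
    (if P 2%N then 4%N else 0%N)) (if P 3%N then 8%N else 0%N).
Definition cnt3 (P : nat -> bool) : nat :=
  Nat.add (Nat.add (nat_of_bool (P 0%N)) (nat_of_bool (P 1%N))) (nat_of_bool (P 2%N)).
Definition cnt4 (P : nat -> bool) : nat :=
  Nat.add (Nat.add (Nat.add (nat_of_bool (P 0%N)) (nat_of_bool (P 1%N))) (nat_of_bool (P 2%N)))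
    (nat_of_bool (P 3%N)).

Lemma eqbE n (x y : 'I_n) : (x == y) = Nat.eqb x y.
Proof. by apply/eqP/PeanoNat.Nat.eqb_spec => [->//|E]; apply/val_inj. Qed.
Lemma ltbE (x y : nat) : (x < y)%N = Nat.ltb x y.
Proof. by apply/idP/idP => [/ssrnat.ltP/PeanoNat.Nat.ltb_lt|/PeanoNat.Nat.ltb_lt/ssrnat.ltP]. Qed.

Lemma bm3_gen (X : {set 'I_3}) (P : nat -> bool) : (forall z : 'I_3, (z \in X) = P z) -> bm3 X = bm3f P.
Proof. by move=> H; rewrite /bm3 /bm3f !H. Qed.
Lemma bm4_gen (X : {set 'I_4}) (P : nat -> bool) : (forall z : 'I_4, (z \in X) = P z) -> bm4 X = bm4f P.
Proof. by move=> H; rewrite /bm4 /bm4f !H. Qed.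
Lemma cnt3_gen (P : pred 'I_3) (Q : nat -> bool) : (forall z : 'I_3, P z = Q z) -> #|[set z | P z]| = cnt3 Q.
Proof. by move=> H; rewrite card3E /cnt3 !H. Qed.
Lemma cnt4_gen (P : pred 'I_4) (Q : nat -> bool) : (forall z : 'I_4, P z = Q z) -> #|[set z | P z]| = cnt4 Q.
Proof. by move=> H; rewrite card4E /cnt4 !H. Qed.

Section EvalN.
Variable R : realFieldType.
Implicit Types (f g : bform R).

Definition eta' (a : nat) : R := if Nat.eqb a 0 then -1 else 1.

Lemma wedgeN i j f g K L : homog i j f -> homog 1 1 g ->
  wedge f g (s3 K, s4 L) = \sum_(x < 3) (if Nat.testbit K x then \sum_(y < 4) (if Nat.testbit L y then
    (-1) ^+ (cnt3 (fun z => Nat.testbit K z && Nat.ltb x z) + cnt4 (fun z => Nat.testbit L z && Nat.ltb y z) + j)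
    * f (s3 (bm3f (fun z => negb (Nat.eqb z x) && Nat.testbit K z)),
         s4 (bm4f (fun z => negb (Nat.eqb z y) && Nat.testbit L z)))
    * g (s3 (bm3f (fun z => Nat.eqb z x)), s4 (bm4f (fun z => Nat.eqb z y))) else 0) else 0).
Proof.
move=> hf hg; rewrite (wedgeF _ _ hf hg); apply: eq_bigr => x _.
rewrite inE; case: ifP => // _; apply: eq_bigr => y _; rewrite inE; case: ifP => // _.
rewrite (@cnt3_gen _ (fun z => Nat.testbit K z && Nat.ltb x z)); last by move=> z; rewrite inE ltbE.
rewrite (@cnt4_gen _ (fun z => Nat.testbit L z && Nat.ltb y z)); last by move=> z; rewrite inE ltbE.
rewrite (@bm3_gen (s3 K :\ x) (fun z => negb (Nat.eqb z x) && Nat.testbit K z)); last by move=> z; rewrite !inE eqbE.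
rewrite (@bm4_gen (s4 L :\ y) (fun z => negb (Nat.eqb z y) && Nat.testbit L z)); last by move=> z; rewrite !inE eqbE.
rewrite (@bm3_gen [set x] (fun z => Nat.eqb z x)); last by move=> z; rewrite !inE eqbE.
by rewrite (@bm4_gen [set y] (fun z => Nat.eqb z y)) //; move=> z; rewrite !inE eqbE.
Qed.

Lemma wedgeNG k l f g K L : homog 1 1 f -> homog k l g ->
  wedge f g (s3 K, s4 L) = \sum_(x < 3) (if Nat.testbit K x then \sum_(y < 4) (if Nat.testbit L y then
    (-1) ^+ (cnt3 (fun z => Nat.testbit K z && Nat.ltb z x) + cnt4 (fun z => Nat.testbit L z && Nat.ltb z y) + k)
    * f (s3 (bm3f (fun z => Nat.eqb z x)), s4 (bm4f (fun z => Nat.eqb z y)))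
    * g (s3 (bm3f (fun z => negb (Nat.eqb z x) && Nat.testbit K z)),
         s4 (bm4f (fun z => negb (Nat.eqb z y) && Nat.testbit L z))) else 0) else 0).
Proof.
move=> hf hg; rewrite (wedgeG _ _ hf hg); apply: eq_bigr => x _.
rewrite inE; case: ifP => // _; apply: eq_bigr => y _; rewrite inE; case: ifP => // _.
rewrite (@cnt3_gen _ (fun z => Nat.testbit K z && Nat.ltb z x)); last by move=> z; rewrite inE ltbE.
rewrite (@cnt4_gen _ (fun z => Nat.testbit L z && Nat.ltb z y)); last by move=> z; rewrite inE ltbE.
rewrite (@bm3_gen (s3 K :\ x) (fun z => negb (Nat.eqb z x) && Nat.testbit K z)); last by move=> z; rewrite !inE eqbE.
rewrite (@bm4_gen (s4 L :\ y) (fun z => negb (Nat.eqb z y) && Nat.testbit L z)); last by move=> z; rewrite !inE eqbE.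
rewrite (@bm3_gen [set x] (fun z => Nat.eqb z x)); last by move=> z; rewrite !inE eqbE.
by rewrite (@bm4_gen [set y] (fun z => Nat.eqb z y)) //; move=> z; rewrite !inE eqbE.
Qed.

Definition brkR f g K (d : 'I_4) : R :=
  \sum_(x < 3) (if Nat.testbit K x then
    (-1) ^+ cnt3 (fun z => Nat.testbit K z && Nat.ltb z x) *
    \sum_(a < 4) \sum_(b < 4) (if (a < b)%N then
      f (s3 (bm3f (fun z => Nat.eqb z x)), s4 (bm4f (fun z => Nat.eqb z a || Nat.eqb z b))) *
      ((nat_of_bool (Nat.eqb d a))%:R * eta' b * g (s3 (bm3f (fun z => negb (Nat.eqb z x) && Nat.testbit K z)), s4 (bm4f (fun z => Nat.eqb z b)))
       - (nat_of_bool (Nat.eqb d b))%:R * eta' a * g (s3 (bm3f (fun z => negb (Nat.eqb z x) && Nat.testbit K z)), s4 (bm4f (fun z => Nat.eqb z a)))) else 0) else 0).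

Lemma brkN f g K (d : 'I_4) : homog 1 2 f ->
  brk f g (s3 K, s4 (bm4f (fun z => Nat.eqb z d))) = brkR f g K d.
Proof.
move=> hf; rewrite /brkR.
rewrite -(@bm4_gen [set d]); last by move=> z; rewrite !inE eqbE.
rewrite s4bm4 brkF //; apply: eq_bigr => x _.
rewrite inE; case: ifP => // _.
rewrite (@cnt3_gen _ (fun z => Nat.testbit K z && Nat.ltb z x)); last by move=> z; rewrite inE ltbE.
congr (_ * _); apply: eq_bigr => a _; apply: eq_bigr => b _; case: ifP => // _.
rewrite (@bm3_gen (s3 K :\ x) (fun z => negb (Nat.eqb z x) && Nat.testbit K z)); last by move=> z; rewrite !inE eqbE.
rewrite (@bm3_gen [set x] (fun z => Nat.eqb z x)); last by move=> z; rewrite !inE eqbE.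
rewrite (@bm4_gen [set a; b] (fun z => Nat.eqb z a || Nat.eqb z b)); last by move=> z; rewrite !inE !eqbE.
rewrite (@bm4_gen [set a] (fun z => Nat.eqb z a)); last by move=> z; rewrite !inE eqbE.
rewrite (@bm4_gen [set b] (fun z => Nat.eqb z b)); last by move=> z; rewrite !inE eqbE.
rewrite !eqbE /eta' /Defs.eta.
have E (c : 'I_4) : (c == ord0) = Nat.eqb c 0 by rewrite eqbE.
by rewrite !E.
Qed.

Lemma brkN1 f g K : homog 1 2 f -> brk f g (s3 K, s4 1) = brkR f g K o40.
Proof. move=> hf; exact: (brkN g K o40 hf). Qed.
Lemma brkN2 f g K : homog 1 2 f -> brk f g (s3 K, s4 2) = brkR f g K o41.
Proof. move=> hf; exact: (brkN g K o41 hf). Qed.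
Lemma brkN4 f g K : homog 1 2 f -> brk f g (s3 K, s4 4) = brkR f g K o42.
Proof. move=> hf; exact: (brkN g K o42 hf). Qed.
Lemma brkN8 f g K : homog 1 2 f -> brk f g (s3 K, s4 8) = brkR f g K o43.
Proof. move=> hf; exact: (brkN g K o43 hf). Qed.
End EvalN.

Section Lin.
Variable R : realFieldType.
Implicit Types (f g h : bform R) (S : {set 'I_3}) (T : {set 'I_4}).

Lemma homogD i j f g : homog i j f -> homog i j g -> homog i j (f + g).
Proof.
move=> hf hg S T; rewrite ffunE.
have [f0|/hf//] := eqVneq (f (S, T)) 0.
by rewrite f0 add0r => /hg.
Qed.
Lemma homogN i j f : homog i j f -> homog i j (- f).
Proof. by move=> hf S T; rewrite ffunE oppr_eq0 => /hf. Qed.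
Lemma homogZ i j (a : R) f : homog i j f -> homog i j (a *: f).
Proof.
move=> hf S T; rewrite ffunE.
have [f0|/hf//] := eqVneq (f (S, T)) 0.
by rewrite f0 scaler0 eqxx.
Qed.
Lemma homogB i j f g : homog i j f -> homog i j g -> homog i j (f - g).
Proof. by move=> hf hg; apply: homogD => //; apply: homogN. Qed.
Lemma homog_0 i j : homog i j (0 : bform R).
Proof. by move=> S T; rewrite ffunE eqxx. Qed.

Lemma wedgeDl f f' g : wedge (f + f') g = wedge f g + wedge f' g.
Proof.
apply/ffunP => ST; rewrite !ffunE -big_split /=; apply: eq_bigr => A _.
rewrite -big_split /=; apply: eq_bigr => B _; rewrite ffunE.
by rewrite mulrDr mulrDl.
Qed.
Lemma wedgeNl f g : wedge (- f) g = - wedge f g.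
Proof.
apply/ffunP => ST; rewrite !ffunE -sumrN; apply: eq_bigr => A _.
rewrite -sumrN; apply: eq_bigr => B _; rewrite ffunE.
by rewrite mulrN mulNr.
Qed.
Lemma wedgeBl f f' g : wedge (f - f') g = wedge f g - wedge f' g.
Proof. by rewrite wedgeDl wedgeNl. Qed.
Lemma wedgeDr f g g' : wedge f (g + g') = wedge f g + wedge f g'.
Proof.
apply/ffunP => ST; rewrite !ffunE -big_split /=; apply: eq_bigr => A _.
rewrite -big_split /=; apply: eq_bigr => B _; rewrite ffunE.
by rewrite mulrDr.
Qed.
Lemma wedgeNr f g : wedge f (- g) = - wedge f g.
Proof.
apply/ffunP => ST; rewrite !ffunE -sumrN; apply: eq_bigr => A _.
rewrite -sumrN; apply: eq_bigr => B _; rewrite ffunE.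
by rewrite mulrN.
Qed.
Lemma wedge0l g : wedge 0 g = 0.
Proof. apply/ffunP => ST; rewrite !ffunE; apply: big1 => A _; apply: big1 => B _; by rewrite ffunE !(mulr0, mul0r). Qed.

Lemma brkDl f f' g : brk (f + f') g = brk f g + brk f' g.
Proof.
apply/ffunP => ST; rewrite !ffunE -big_split /=; apply: eq_bigr => d _.
rewrite -big_split /=; apply: eq_bigr => A _; rewrite -mulrDr; congr (_ * _).
rewrite -big_split /=; apply: eq_bigr => X _.
rewrite -big_split /=; apply: eq_bigr => c _; rewrite ffunE.
by rewrite !mulrDl.
Qed.
Lemma brkNl f g : brk (- f) g = - brk f g.
Proof.
apply/ffunP => ST; rewrite !ffunE -sumrN; apply: eq_bigr => d _.
rewrite -sumrN; apply: eq_bigr => A _; rewrite -mulrN; congr (_ * _).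
rewrite -sumrN; apply: eq_bigr => X _.
rewrite -sumrN; apply: eq_bigr => c _; rewrite ffunE.
by rewrite !mulNr.
Qed.
Lemma brkBl f f' g : brk (f - f') g = brk f g - brk f' g.
Proof. by rewrite brkDl brkNl. Qed.

Lemma cardD_sub n (S A : {set 'I_n}) : A \subset S -> #|S| = (#|A| + #|S :\: A|)%N.
Proof. by move=> sAS; rewrite -(cardsID A S) (setIidPr sAS). Qed.

Lemma wedge_homog i j k l f g : homog i j f -> homog k l g -> homog (i + k) (j + l) (wedge f g).
Proof.
move=> hf hg S T Hne.
suff : (#|S| == (i + k)%N) && (#|T| == (j + l)%N) by case/andP => /eqP -> /eqP ->.
apply: contraNT Hne => H; rewrite ffunE.
apply/eqP; apply: big1 => A sAS; apply: big1 => B sBT.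
have [f0|/hf [cA cB]] := eqVneq (f (A, B)) 0; first by rewrite f0 !(mulr0, mul0r).
have [g0|/hg [cA' cB']] := eqVneq (g (S :\: A, T :\: B)) 0; first by rewrite g0 !(mulr0, mul0r).
by case/negP: H; rewrite (cardD_sub sAS) (cardD_sub sBT) cA cB cA' cB' !eqxx.
Qed.

Lemma brk_homog f g : homog 1 2 f -> homog 1 1 g -> homog 2 1 (brk f g).
Proof.
move=> hf hg S T Hne.
suff : (#|S| == 2%N) && (#|T| == 1%N) by case/andP => /eqP -> /eqP ->.
apply: contraNT Hne => H; rewrite ffunE.
apply/eqP; apply: big1 => d /eqP Td; apply: big1 => A sAS.
rewrite big1 ?mulr0 // => X _; apply: big1 => c _.
have [f0|/hf [cA _]] := eqVneq (f (A, X)) 0; first by rewrite f0 !(mulr0, mul0r).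
have [g0|/hg [cA' _]] := eqVneq (g (S :\: A, [set c])) 0; first by rewrite g0 !(mulr0, mul0r).
by case/negP: H; move: Td => /= Td; rewrite (cardD_sub sAS) cA cA' Td cards1 !eqxx.
Qed.
End Lin.

Lemma card3S (S : {set 'I_3}) : #|S| = cnt3 (Nat.testbit (bm3 S)).
Proof.
transitivity #|[set z | z \in S]|; first by apply: eq_card => z; rewrite inE.
rewrite card3E /cnt3 /bm3.
by case: (o30 \in S); case: (o31 \in S); case: (o32 \in S).
Qed.
Lemma card4S (T : {set 'I_4}) : #|T| = cnt4 (Nat.testbit (bm4 T)).
Proof.
transitivity #|[set z | z \in T]|; first by apply: eq_card => z; rewrite inE.
rewrite card4E /cnt4 /bm4.
by case: (o40 \in T); case: (o41 \in T); case: (o42 \in T); case: (o43 \in T).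
Qed.
Lemma bm3_lt S : (bm3 S < 8)%N.
Proof. by rewrite /bm3; case: (_ \in S); case: (_ \in S); case: (_ \in S). Qed.
Lemma bm4_lt T : (bm4 T < 16)%N.
Proof. by rewrite /bm4; case: (_ \in T); case: (_ \in T); case: (_ \in T); case: (_ \in T). Qed.

Section Ext.
Variable R : realFieldType.
Implicit Types (f g h X Y : bform R).

Lemma bform_ext0 i j X : homog i j X ->
  (forall K L, (K < 8)%N -> (L < 16)%N -> cnt3 (Nat.testbit K) = i -> cnt4 (Nat.testbit L) = j ->
     X (s3 K, s4 L) = 0) -> X = 0.
Proof.
move=> hX H; apply/ffunP => -[S T]; rewrite ffunE.
have [//|/hX [cS cT]] := eqVneq (X (S, T)) 0.
rewrite -(s3bm3 S) -(s4bm4 T); apply: H; rewrite ?bm3_lt ?bm4_lt //.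
  by rewrite -card3S.
by rewrite -card4S.
Qed.
End Ext.

Ltac ext_coords hX :=
  apply: (bform_ext0 hX); rewrite /cnt3 /cnt4;
  intros K L hK hL;
  destruct K as [|[|[|[|[|[|[|[|K]]]]]]]]; try (by move: hK);
  destruct L as [|[|[|[|[|[|[|[|[|[|[|[|[|[|[|[|L]]]]]]]]]]]]]]]]; try (by move: hL);
  simpl; intros cK cL; try discriminate.

Section G.
Variable R : realFieldType.
Implicit Types (f g h X Y : bform R).

Lemma wedge_comm e Y : homog 1 1 e -> homog 2 1 Y -> wedge e Y = wedge Y e.
Proof.
move=> he hY; apply/eqP; rewrite -subr_eq0; apply/eqP.
have h1 := wedge_homog he hY; have h2 := wedge_homog hY he.
have h3 := homogB h1 h2.
ext_coords h3; rewrite ffunE (wedgeNG _ _ he hY) ffunE (wedgeN _ _ hY he) !sum3E !sum4E /=; ring.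
Qed.
End G.

Ltac evF1 hu he hY :=
  rewrite (wedgeN _ _ hY he) !(wedgeN _ _ hu he) !sum3E !sum4E /=;
  rewrite /bm3f /bm4f /cnt3 /cnt4 /=;
  rewrite ?(brkN1 _ _ hu) ?(brkN2 _ _ hu) ?(brkN4 _ _ hu) ?(brkN8 _ _ hu) /brkR !sum3E !pairs4E /=;
  rewrite /bm3f /bm4f /cnt3 /cnt4 /eta' /=; ring.

Section F1.
Variable R : realFieldType.
Implicit Types (u e : bform R).
Lemma F1c3 u e : homog 1 2 u -> homog 1 1 e ->
  wedge (brk u e) e (s3 7, s4 3) = 0 - e (s3 4, s4 4) * wedge u e (s3 3, s4 7) - e (s3 4, s4 8) * wedge u e (s3 3, s4 11) + e (s3 2, s4 4) * wedge u e (s3 5, s4 7) + e (s3 2, s4 8) * wedge u e (s3 5, s4 11) - e (s3 1, s4 4) * wedge u e (s3 6, s4 7) - e (s3 1, s4 8) * wedge u e (s3 6, s4 11).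
Proof. move=> hu he; have hY := brk_homog hu he; evF1 hu he hY. Qed.

Lemma F1c5 u e : homog 1 2 u -> homog 1 1 e ->
  wedge (brk u e) e (s3 7, s4 5) = 0 + e (s3 4, s4 2) * wedge u e (s3 3, s4 7) - e (s3 4, s4 8) * wedge u e (s3 3, s4 13) - e (s3 2, s4 2) * wedge u e (s3 5, s4 7) + e (s3 2, s4 8) * wedge u e (s3 5, s4 13) + e (s3 1, s4 2) * wedge u e (s3 6, s4 7) - e (s3 1, s4 8) * wedge u e (s3 6, s4 13).
Proof. move=> hu he; have hY := brk_homog hu he; evF1 hu he hY. Qed.

Lemma F1c6 u e : homog 1 2 u -> homog 1 1 e ->
  wedge (brk u e) e (s3 7, s4 6) = 0 + e (s3 4, s4 1) * wedge u e (s3 3, s4 7) - e (s3 4, s4 8) * wedge u e (s3 3, s4 14) - e (s3 2, s4 1) * wedge u e (s3 5, s4 7) + e (s3 2, s4 8) * wedge u e (s3 5, s4 14) + e (s3 1, s4 1) * wedge u e (s3 6, s4 7) - e (s3 1, s4 8) * wedge u e (s3 6, s4 14).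
Proof. move=> hu he; have hY := brk_homog hu he; evF1 hu he hY. Qed.

Lemma F1c9 u e : homog 1 2 u -> homog 1 1 e ->
  wedge (brk u e) e (s3 7, s4 9) = 0 + e (s3 4, s4 2) * wedge u e (s3 3, s4 11) + e (s3 4, s4 4) * wedge u e (s3 3, s4 13) - e (s3 2, s4 2) * wedge u e (s3 5, s4 11) - e (s3 2, s4 4) * wedge u e (s3 5, s4 13) + e (s3 1, s4 2) * wedge u e (s3 6, s4 11) + e (s3 1, s4 4) * wedge u e (s3 6, s4 13).
Proof. move=> hu he; have hY := brk_homog hu he; evF1 hu he hY. Qed.

Lemma F1c10 u e : homog 1 2 u -> homog 1 1 e ->
  wedge (brk u e) e (s3 7, s4 10) = 0 + e (s3 4, s4 1) * wedge u e (s3 3, s4 11) + e (s3 4, s4 4) * wedge u e (s3 3, s4 14) - e (s3 2, s4 1) * wedge u e (s3 5, s4 11) - e (s3 2, s4 4) * wedge u e (s3 5, s4 14) + e (s3 1, s4 1) * wedge u e (s3 6, s4 11) + e (s3 1, s4 4) * wedge u e (s3 6, s4 14).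
Proof. move=> hu he; have hY := brk_homog hu he; evF1 hu he hY. Qed.

Lemma F1c12 u e : homog 1 2 u -> homog 1 1 e ->
  wedge (brk u e) e (s3 7, s4 12) = 0 + e (s3 4, s4 1) * wedge u e (s3 3, s4 13) - e (s3 4, s4 2) * wedge u e (s3 3, s4 14) - e (s3 2, s4 1) * wedge u e (s3 5, s4 13) + e (s3 2, s4 2) * wedge u e (s3 5, s4 14) + e (s3 1, s4 1) * wedge u e (s3 6, s4 13) - e (s3 1, s4 2) * wedge u e (s3 6, s4 14).
Proof. move=> hu he; have hY := brk_homog hu he; evF1 hu he hY. Qed.

Lemma F1 u e : homog 1 2 u -> homog 1 1 e -> wedge u e = 0 -> wedge (brk u e) e = 0.
Proof.
move=> hu he hW; have hY := brk_homog hu he.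
have Lz K L : wedge u e (s3 K, s4 L) = 0 by rewrite hW ffunE.
have h := wedge_homog hY he.
ext_coords h.
- by rewrite F1c3 // !Lz; ring.
- by rewrite F1c5 // !Lz; ring.
- by rewrite F1c6 // !Lz; ring.
- by rewrite F1c9 // !Lz; ring.
- by rewrite F1c10 // !Lz; ring.
- by rewrite F1c12 // !Lz; ring.
Qed.
End F1.

Definition pw (i : nat) : nat := match i with 0 => 1 | 1 => 2 | 2 => 4 | _ => 8 end.
Definition md3 (k : nat) : nat := match k with 0 => 0 | 1 => 1 | 2 => 2 | 3 => 0 | 4 => 1 | _ => 2 end.
Definition skp (a k : nat) : nat := if Nat.ltb k a then k else S k.

Section F2defs.
Variable R : realFieldType.
Definition sum3f (F : nat -> R) := F 0%N + F 1%N + F 2%N.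
Definition sum4f (F : nat -> R) := F 0%N + F 1%N + F 2%N + F 3%N.
Definition det3f (m : nat -> nat -> R) : R :=
  m 0%N 0%N * (m 1%N 1%N * m 2%N 2%N - m 1%N 2%N * m 2%N 1%N)
- m 0%N 1%N * (m 1%N 0%N * m 2%N 2%N - m 1%N 2%N * m 2%N 0%N)
+ m 0%N 2%N * (m 1%N 0%N * m 2%N 1%N - m 1%N 1%N * m 2%N 0%N).
Definition adjf (m : nat -> nat -> R) (i j : nat) : R :=
  m (md3 (j + 1)) (md3 (i + 1)) * m (md3 (j + 2)) (md3 (i + 2))
  - m (md3 (j + 1)) (md3 (i + 2)) * m (md3 (j + 2)) (md3 (i + 1)).

Variables (u e : bform R).
Definition ec (i a : nat) : R := e (s3 (pw i), s4 (pw a)).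
Definition Um (i a b : nat) : R :=
  if Nat.ltb a b then u (s3 (pw i), s4 (Nat.add (pw a) (pw b)))
  else if Nat.ltb b a then - u (s3 (pw i), s4 (Nat.add (pw a) (pw b))) else 0.
Definition Wf (i : nat) (x y : nat -> R) : R :=
  sum4f (fun a => sum4f (fun b => x a * eta' R a * Um i a b * eta' R b * y b)).
Definition gf (i j : nat) : R := sum4f (fun a => eta' R a * ec i a * ec j a).
Definition mv (a : nat) : R := (if Nat.odd a then -1 else 1) * det3f (fun i k => ec i (skp a k)).
Definition nv (a : nat) : R := eta' R a * mv a.
Definition dg : R := det3f gf.
Definition alf (a j : nat) : R := sum3f (fun k => adjf gf j k * ec k a * eta' R a).
End F2defs.

Section F2defs2.
Variable R : realFieldType.
Variables (u e : bform R).
Definition Bf (i j d : nat) : R :=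
  sum4f (fun c => eta' R c * (Um u i d c * ec e j c - Um u j d c * ec e i c)).
Definition Dq (x y k : nat) : R := sum4f (fun d => eta' R d * ec e k d * Bf x y d).
Definition evec (j : nat) : nat -> R := fun a => ec e j a.
Definition Gf (j : nat) (x : nat -> R) : R := sum4f (fun a => eta' R a * ec e j a * x a).
Definition rowZ (x y : nat -> R) (r a : nat) : R :=
  match r with 0 => eta' R a * x a | 1 => eta' R a * y a | _ => mv e a end.
Definition Zf (S : nat) (x y : nat -> R) : R :=
  sum4f (fun t => wedge u e (s3 S, s4 (Nat.sub 15 (pw t))) * det3f (fun r s => rowZ x y r (skp t s))).
End F2defs2.

Section Key.
Variable R : realFieldType.
Definition Rr (c g : nat -> nat -> R) (i j k l : nat) : R :=
  c i l * g j k - c i k * g j l - c j l * g i k + c j k * g i l.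

Lemma keyc (c g : nat -> nat -> R) :
  (forall i j, g i j = g j i) ->
  (forall i j k l, (i < j)%N -> (j < 3)%N -> (k < 3)%N -> (l < 3)%N -> Rr c g i j k l = 0) ->
  det3f g != 0 -> forall i j, (i < 3)%N -> (j < 3)%N -> c i j = 0.
Proof.
move=> gs H dn.
have HR i j k l : (i < 3)%N -> (j < 3)%N -> (k < 3)%N -> (l < 3)%N -> Rr c g i j k l = 0.
  move=> hi hj hk hl; case: (ltngtP i j) => [ij|ji|<-].
  - exact: H.
  - transitivity (- Rr c g j i k l); first by rewrite /Rr; ring.
    by rewrite H // oppr0.
  - by rewrite /Rr; ring.
pose tau := sum3f (fun j => sum3f (fun k => adjf g j k * c j k)).
have E i l : (i < 3)%N -> (l < 3)%N -> det3f g * c i l + tau * g i l = 0.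
  move=> hi hl.
  transitivity (sum3f (fun j => sum3f (fun k => adjf g j k * Rr c g i j k l))); last first.
    by rewrite /sum3f !HR // !mulr0 !addr0.
  case: i hi => [|[|[|//]]] _; case: l hl => [|[|[|//]]] _;
  rewrite /tau /Rr /sum3f /adjf /md3 /det3f /=;
  rewrite ?(gs 1%N 0%N) ?(gs 2%N 0%N) ?(gs 2%N 1%N); ring.
have T0 : 4%:R * det3f g * tau = 0.
  transitivity (sum3f (fun i => sum3f (fun l => adjf g l i * (det3f g * c i l + tau * g i l)))).
    rewrite /tau /sum3f /adjf /md3 /det3f /=.
    rewrite ?(gs 1%N 0%N) ?(gs 2%N 0%N) ?(gs 2%N 1%N); ring.
  by rewrite /sum3f !E // !mulr0 !addr0.
have tau0 : tau = 0.
  move: T0 => /eqP; rewrite !mulf_eq0 (negbTE dn) orbF => /orP[|/eqP //].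
  by rewrite pnatr_eq0.
move=> i j hi hj; have := E i j hi hj; rewrite tau0 mul0r addr0 => /eqP.
by rewrite mulf_eq0 (negbTE dn) /= => /eqP.
Qed.
End Key.

Ltac unf := rewrite /Dq /Bf /dg /alf /Gf /rowZ /evec /Wf /nv /mv /det3f /sum3f /adjf /md3 /gf
  /Um /ec /sum4f /eta' /skp /=.

Section F2.
Variable R : realFieldType.
Variables (u e : bform R).
Hypotheses (hu : homog 1 2 u) (he : homog 1 1 e).

Definition dlt (a : nat) : nat -> R := fun x => if Nat.eqb a x then 1 else 0.

Lemma Wext i (x x' y : nat -> R) : (forall t, (t < 4)%N -> x t = x' t) -> Wf u i x y = Wf u i x' y.
Proof. by move=> H; rewrite /Wf /sum4f !H. Qed.
Lemma Wext2 i (x y y' : nat -> R) : (forall t, (t < 4)%N -> y t = y' t) -> Wf u i x y = Wf u i x y'.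
Proof. by move=> H; rewrite /Wf /sum4f !H. Qed.
Lemma Wlin1 i (k : nat -> R) (m : R) (n y : nat -> R) :
  Wf u i (fun x => sum3f (fun j => k j * evec e j x) - m * n x) y =
  sum3f (fun j => k j * Wf u i (evec e j) y) - m * Wf u i n y.
Proof. rewrite /Wf /sum3f /sum4f; ring. Qed.
Lemma Wlin2 i (k : nat -> R) (m : R) (n x : nat -> R) :
  Wf u i x (fun y => sum3f (fun j => k j * evec e j y) - m * n y) =
  sum3f (fun j => k j * Wf u i x (evec e j)) - m * Wf u i x n.
Proof. rewrite /Wf /sum3f /sum4f; ring. Qed.
Lemma Wscal1 i (c : R) (x y : nat -> R) : Wf u i (fun t => c * x t) y = c * Wf u i x y.
Proof. rewrite /Wf /sum4f; ring. Qed.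
Lemma Wscal2 i (c : R) (x y : nat -> R) : Wf u i x (fun t => c * y t) = c * Wf u i x y.
Proof. rewrite /Wf /sum4f; ring. Qed.
Lemma Wanti i (x y : nat -> R) : Wf u i x y = - Wf u i y x.
Proof. rewrite /Wf /sum4f /Um /=; ring. Qed.
Lemma Wdlt i a b : (a < 4)%N -> (b < 4)%N -> Wf u i (dlt a) (dlt b) = eta' R a * Um u i a b * eta' R b.
Proof.
by case: a => [|[|[|[|//]]]] _; case: b => [|[|[|[|//]]]] _; rewrite /Wf /dlt /sum4f /Um /=; ring.
Qed.

Lemma I0 a x : (a < 4)%N -> (x < 4)%N ->
  dg e * dlt a x = sum3f (fun j => alf e a j * evec e j x) - mv e a * nv e x.
Proof.
by case: a => [|[|[|[|//]]]] _; case: x => [|[|[|[|//]]]] _; rewrite /dlt; unf; ring.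
Qed.

Lemma qid i j k : (i < 3)%N -> (j < 3)%N -> (k < 3)%N ->
  2%:R * Wf u i (evec e j) (evec e k) = Dq u e i k j - Dq u e i j k + Dq u e j k i.
Proof.
by case: i => [|[|[|//]]] _; case: j => [|[|[|//]]] _; case: k => [|[|[|//]]] _; unf; ring.
Qed.

Lemma Bcoord i j d : (i < j)%N -> (j < 3)%N -> (d < 4)%N ->
  brk u e (s3 (Nat.add (pw i) (pw j)), s4 (pw d)) = Bf u e i j d.
Proof.
case: i => [|[|[|//]]]; case: j => [|[|[|//]]] //= _ _;
case: d => [|[|[|[|//]]]] _;
rewrite ?(brkN1 _ _ hu) ?(brkN2 _ _ hu) ?(brkN4 _ _ hu) ?(brkN8 _ _ hu) /brkR !sum3E !pairs4E /=;
rewrite /bm3f /bm4f /cnt3 /cnt4 /=; unf; ring.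
Qed.

Lemma Zid i j (x y : nat -> R) : (i < j)%N -> (j < 3)%N ->
  Zf u e (Nat.add (pw i) (pw j)) x y = Wf u i y (nv e) * Gf e j x - Wf u i x (nv e) * Gf e j y
   - Wf u j y (nv e) * Gf e i x + Wf u j x (nv e) * Gf e i y.
Proof.
case: i => [|[|[|//]]]; case: j => [|[|[|//]]] //= _ _;
rewrite /Zf /sum4f /= !(wedgeN _ _ hu he) !sum3E !sum4E /=;
rewrite /bm3f /bm4f /cnt3 /cnt4 /=; unf; ring.
Qed.

Lemma F2 : wedge u e = 0 -> brk u e = 0 -> dg e != 0 -> u = 0.
Proof.
move=> hW hB dn.
have Bz0 i j d : (i < j)%N -> (j < 3)%N -> (d < 4)%N -> Bf u e i j d = 0.
  by move=> ij j3 d4; rewrite -Bcoord // hB ffunE.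
have Bz i j d : (i < 3)%N -> (j < 3)%N -> (d < 4)%N -> Bf u e i j d = 0.
  move=> hi hj hd; case: (ltngtP i j) => [ij|ji|<-].
  - exact: Bz0.
  - transitivity (- Bf u e j i d); first by rewrite /Bf /sum4f; ring.
    by rewrite Bz0 // oppr0.
  - by rewrite /Bf /sum4f; ring.
have Dz x y k : (x < 3)%N -> (y < 3)%N -> Dq u e x y k = 0.
  by move=> hx hy; rewrite /Dq /sum4f !Bz // !mulr0 !addr0.
have qz i j k : (i < 3)%N -> (j < 3)%N -> (k < 3)%N -> Wf u i (evec e j) (evec e k) = 0.
  move=> hi hj hk; have := qid hi hj hk; rewrite !Dz // subrr add0r => /eqP.
  by rewrite mulf_eq0 pnatr_eq0 /= => /eqP.
have cz : forall i l, (i < 3)%N -> (l < 3)%N -> Wf u i (evec e l) (nv e) = 0.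
  apply: (@keyc R (fun i l => Wf u i (evec e l) (nv e)) (gf e)) => //.
    by move=> i j; rewrite /gf /sum4f; ring.
  move=> i j k l ij j3 k3 l3.
  have := Zid (evec e k) (evec e l) ij j3.
  rewrite /Zf /sum4f hW !ffunE !mul0r !addr0 => /esym E.
  by rewrite /Rr -E.
have Wn i a y : (i < 3)%N -> (a < 4)%N ->
    dg e * Wf u i (dlt a) y = sum3f (fun j => alf e a j * Wf u i (evec e j) y) - mv e a * Wf u i (nv e) y.
  move=> hi ha; rewrite -Wscal1 -Wlin1; apply: Wext => t ht; exact: I0.
have W1e i a k : (i < 3)%N -> (a < 4)%N -> (k < 3)%N -> Wf u i (dlt a) (evec e k) = 0.
  move=> hi ha hk; have := Wn i a (evec e k) hi ha.
  rewrite /sum3f !qz // (Wanti i (nv e)) cz // oppr0 !mulr0 !addr0 subrr => /eqP.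
  by rewrite mulf_eq0 (negbTE dn) /= => /eqP.
have W1n i a : (i < 3)%N -> (a < 4)%N -> Wf u i (dlt a) (nv e) = 0.
  move=> hi ha; have := Wn i a (nv e) hi ha.
  have nn : Wf u i (nv e) (nv e) = 0.
    have := Wanti i (nv e) (nv e); move/eqP; rewrite -subr_eq0 opprK -mulr2n mulrn_eq0 /=.
    by move/eqP.
  rewrite /sum3f !cz // nn !mulr0 !addr0 subrr => /eqP.
  by rewrite mulf_eq0 (negbTE dn) /= => /eqP.
have Wdd i a b : (i < 3)%N -> (a < 4)%N -> (b < 4)%N -> Wf u i (dlt a) (dlt b) = 0.
  move=> hi ha hb.
  have : dg e * Wf u i (dlt a) (dlt b) = 0.
    rewrite -Wscal2 (@Wext2 i (dlt a) _ (fun y => sum3f (fun j => alf e b j * evec e j y) - mv e b * nv e y)); last first.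
      by move=> t ht; exact: I0.
    by rewrite Wlin2 /sum3f !W1e // W1n // !mulr0 !addr0 subrr.
  by move/eqP; rewrite mulf_eq0 (negbTE dn) /= => /eqP.
have Uz i a b : (i < 3)%N -> (a < 4)%N -> (b < 4)%N -> Um u i a b = 0.
  move=> hi ha hb; have := Wdd i a b hi ha hb; rewrite Wdlt //.
  have ez c : eta' R c != 0 by rewrite /eta'; case: Nat.eqb; rewrite ?oppr_eq0 oner_eq0.
  by move/eqP; rewrite !mulf_eq0 !(negbTE (ez _)) orbF /= => /eqP.
ext_coords hu.
all: first [ exact: (Uz 0 0 1 isT isT isT) | exact: (Uz 0 0 2 isT isT isT) | exact: (Uz 0 0 3 isT isT isT) | exact: (Uz 0 1 2 isT isT isT) | exact: (Uz 0 1 3 isT isT isT) | exact: (Uz 0 2 3 isT isT isT) | exact: (Uz 1 0 1 isT isT isT) | exact: (Uz 1 0 2 isT isT isT) | exact: (Uz 1 0 3 isT isT isT) | exact: (Uz 1 1 2 isT isT isT) | exact: (Uz 1 1 3 isT isT isT) | exact: (Uz 1 2 3 isT isT isT) | exact: (Uz 2 0 1 isT isT isT) | exact: (Uz 2 0 2 isT isT isT) | exact: (Uz 2 0 3 isT isT isT) | exact: (Uz 2 1 2 isT isT isT) | exact: (Uz 2 1 3 isT isT isT) | exact: (Uz 2 2 3 isT isT isT) ].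
Qed.
End F2.

Lemma s3_1 : [set o30] = s3 1. Proof. by apply/setP => -[[|[|[|//]]] h]; rewrite !inE. Qed.
Lemma s3_2 : [set o31] = s3 2. Proof. by apply/setP => -[[|[|[|//]]] h]; rewrite !inE. Qed.
Lemma s3_4 : [set o32] = s3 4. Proof. by apply/setP => -[[|[|[|//]]] h]; rewrite !inE. Qed.
Lemma s4_1 : [set o40] = s4 1. Proof. by apply/setP => -[[|[|[|[|//]]]] h]; rewrite !inE. Qed.
Lemma s4_2 : [set o41] = s4 2. Proof. by apply/setP => -[[|[|[|[|//]]]] h]; rewrite !inE. Qed.
Lemma s4_4 : [set o42] = s4 4. Proof. by apply/setP => -[[|[|[|[|//]]]] h]; rewrite !inE. Qed.
Lemma s4_8 : [set o43] = s4 8. Proof. by apply/setP => -[[|[|[|[|//]]]] h]; rewrite !inE. Qed.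

Section Det.
Variable R : realFieldType.
Lemma det3E (m : nat -> nat -> R) :
  \det (\matrix_(i < 3, j < 3) m i j) = det3f m.
Proof.
rewrite (expand_det_row _ ord0) !big_ord_recr big_ord0 /= /cofactor.
rewrite !(expand_det_row _ ord0) !big_ord_recr !big_ord0 /=.
rewrite /cofactor /= !det_mx11 !mxE /= /det3f.
ring.
Qed.

Lemma det_gmat (e : bform R) : \det (gmat e) = dg e.
Proof.
have -> : gmat e = \matrix_(i < 3, j < 3) gf e i j.
  apply/matrixP => -[i hi] [j hj]; rewrite !mxE !sum4E.
  rewrite !mxE !sum4E !mxE /=.
  have Hi : Ordinal hi = (match i with 0 => o30 | 1 => o31 | _ => o32 end).
    by apply/val_inj; case: i hi => [|[|[|//]]].
  have Hj : Ordinal hj = (match j with 0 => o30 | 1 => o31 | _ => o32 end).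
    by apply/val_inj; case: j hj => [|[|[|//]]].
  rewrite Hi Hj; clear Hi Hj.
  case: i hi => [|[|[|//]]] hi; case: j hj => [|[|[|//]]] hj;
  rewrite /= ?s3_1 ?s3_2 ?s3_4 ?s4_1 ?s4_2 ?s4_4 ?s4_8 /gf /sum4f /ec /eta' /Defs.eta /=; ring.
by rewrite det3E.
Qed.
End Det.

Section Main.
Variable R : realFieldType.
Implicit Types (X Y : bform R).

Lemma inWD i j (e X Y : bform R) : inW i j e X -> inW i j e Y -> inW i j e (X + Y).
Proof. by case=> hX wX [hY wY]; split; [exact: homogD | rewrite wedgeDl wX wY addr0]. Qed.
Lemma inWN i j (e X : bform R) : inW i j e X -> inW i j e (- X).
Proof. by case=> hX wX; split; [exact: homogN | rewrite wedgeNl wX oppr0]. Qed.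
Lemma inWB i j (e X Y : bform R) : inW i j e X -> inW i j e Y -> inW i j e (X - Y).
Proof. by move=> hX hY; apply: inWD => //; apply: inWN. Qed.
Lemma inW0 i j (e : bform R) : inW i j e 0.
Proof. by split; [exact: homog_0 | rewrite wedge0l]. Qed.

Lemma zid (V : zmodType) (x y a b c : V) : (x + y - c) - ((x - a) + (y - b)) = (a + b) - c.
Proof. by rewrite addrAC opprD addrACA !subKr. Qed.
Lemma zid2 (V : zmodType) (w v a b : V) : (w + v + a) - (w + b) = a - b + v.
Proof. by rewrite opprD addrACA [w + v]addrC addrK addrC. Qed.

Lemma dcovD (de w v e : bform R) : dcov de (w + v) e = dcov de w e + brk v e.
Proof. by rewrite /dcov brkDl addrA. Qed.
End Main.

Unset Implicit Arguments.
Theorem lemma4p12 (R : realFieldType) (e de : bform R)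
    (C : bform R -> Prop) (p : bform R -> bform R) (vt : bform R -> bform R) :
  (* e in Omega^1_nd(dM, V) *)
  homog 1 1 e -> row_free (emat e) ->
  (* g^\partial = e^* eta nondegenerate *)
  \det (gmat e) != 0 ->
  (* d e in Omega^2(dM, V) *)
  homog 2 1 de ->
  (* C = C_(2,1): a linear complement of W_(2,1) in Omega^2(dM, V) *)
  (forall x, C x -> homog 2 1 x) ->
  C 0 -> (forall x y, C x -> C y -> C (x + y)) ->
  (forall (a : R) x, C x -> C (a *: x)) ->
  (forall x, C x -> inW 2 1 e x -> x = 0) ->
  (forall x, homog 2 1 x -> exists w c, inW 2 1 e w /\ C c /\ x = w + c) ->
  (* p = projection onto W_(2,1) along C_(2,1) *)
  (forall x, homog 2 1 x -> inW 2 1 e (p x) /\ C (x - p x)) ->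
  (* vt omega = - phi_e^{-1} (p d_omega e), phi_e = p o [., e] on W_(1,2) *)
  (forall omega, homog 1 2 omega ->
     inW 1 2 e (vt omega) /\ p (brk (vt omega) e) = - p (dcov de omega e)) ->
  let wt := fun omega => omega + vt omega in
  (forall omega v, homog 1 2 omega -> inW 1 2 e v -> wt (omega + v) = wt omega) /\
  (forall omega, homog 1 2 omega -> same_class e (wt omega) omega) /\
  (forall omega, homog 1 2 omega -> p (dcov de (wt omega) e) = 0) /\
  (forall omega, homog 1 2 omega ->
     (dcov de (wt omega) e = 0 <-> wedge e (dcov de omega e) = 0)).
Proof.
move=> he _ hdet hde hCh hC0 hCD hCZ hCW _ hp hvt wt.
have dn : dg e != 0 by rewrite -det_gmat.
have hCN x : C x -> C (- x) by move=> Cx; rewrite -scaleN1r; exact: hCZ.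
have hCB x y : C x -> C y -> C (x - y) by move=> Cx Cy; apply: hCD => //; exact: hCN.
have p_id x : homog 2 1 x -> inW 2 1 e x -> p x = x.
  move=> hx wx; have [wpx Cx] := hp x hx.
  by apply/eqP; rewrite eq_sym -subr_eq0; apply/eqP/hCW => //; apply: inWB.
have p0 : p 0 = 0 by apply: p_id; [exact: homog_0 | exact: inW0].
have p_add x y : homog 2 1 x -> homog 2 1 y -> p (x + y) = p x + p y.
  move=> hx hy; have [wx Cx] := hp x hx; have [wy Cy] := hp y hy.
  have [wxy Cxy] := hp (x + y) (homogD hx hy).
  apply/eqP; rewrite -subr_eq0; apply/eqP/hCW; last by apply: inWB => //; exact: inWD.
  rewrite -opprB -(zid x y); apply: hCN; apply: hCB => //; exact: hCD.
have p_opp x : homog 2 1 x -> p (- x) = - p x.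
  move=> hx; apply/eqP; rewrite -addr_eq0 -p_add ?addNr ?p0 //; exact: homogN.
have hdcov w : homog 1 2 w -> homog 2 1 (dcov de w e).
  by move=> hw; apply: homogD => //; exact: brk_homog.
have hbrk w : homog 1 2 w -> homog 2 1 (brk w e) by move=> hw; exact: brk_homog.
have inj u : inW 1 2 e u -> p (brk u e) = 0 -> u = 0.
  case=> hu wu pu.
  have wb : inW 2 1 e (brk u e) by split; [exact: hbrk | exact: F1].
  by apply: (F2 hu he wu) => //; rewrite -(p_id _ (hbrk _ hu) wb).
have claim3 w : homog 1 2 w -> p (dcov de (wt w) e) = 0.
  move=> hw; have [[hv _] pv] := hvt w hw.
  by rewrite /wt dcovD p_add ?pv ?subrr //; [exact: hdcov | exact: hbrk].
split; [|split; [|split]].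
- move=> w v hw [hv wv].
  have hwv : homog 1 2 (w + v) by exact: homogD.
  have [[ia wa] pa] := hvt _ hwv; have [[ib wb] pb] := hvt _ hw.
  set a := vt (w + v) in ia wa pa *; set b := vt w in ib wb pb *.
  have U : a - b + v = 0.
    apply: inj; first by apply: inWD; [apply: inWB|].
    have hA := hbrk a ia; have hB := hbrk b ib; have hV := hbrk v hv; have hD := hdcov w hw.
    rewrite !brkDl brkNl (p_add _ _ (homogD hA (homogN hB)) hV) (p_add _ _ hA (homogN hB)).
    rewrite (p_opp _ hB) pa pb dcovD (p_add _ _ hD hV).
    by rewrite opprK -addrA addNr.
  by rewrite /wt; apply/eqP; rewrite -subr_eq0; apply/eqP; rewrite -U zid2.
- move=> w hw; rewrite /same_class /wt.
  have -> : w + vt w - w = vt w by rewrite addrC addKr.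
  by case: (hvt w hw).
- exact: claim3.
- move=> w hw; have [[hv wv] pv] := hvt w hw.
  have wb : inW 2 1 e (brk (vt w) e) by split; [exact: hbrk | exact: F1].
  have Dw : dcov de (wt w) e = dcov de w e + brk (vt w) e by rewrite /wt dcovD.
  split.
  + rewrite Dw => /eqP; rewrite addr_eq0 => /eqP ->.
    by rewrite wedgeNr wedge_comm ?wb.2 ?oppr0 //; exact: hbrk.
  + move=> H.
    have wd : inW 2 1 e (dcov de w e) by split; [exact: hdcov | rewrite -wedge_comm //; exact: hdcov].
    rewrite -(claim3 w hw) p_id //; first by rewrite Dw; apply: homogD; [exact: hdcov | exact: hbrk].
    by rewrite Dw; apply: inWD.
Qed.
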